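(* Let $\mathcal{T}$ be the law with tail function $\overline{F}(t)=e^{-t}$ for $t\in[0,1)\cup(2,\infty)$ and $\overline{F}(t)=e^{-2}$ for $t\in[1,2]$. Then $\overline{F}(u)\overline{F}(1)\leq\overline{F}(1+u)$ for all $u\in[0,\infty)$, yet for every $\epsilon\in(0,\tfrac12)$, with $r=\tfrac12+\epsilon$, one has $\mathcal{T}^{\delta_r}((1,\infty])>\mathcal{T}((1,\infty])$.
   Context: For a probability law $\mathcal{T}$ on $[0,\infty]$ and $r\in(0,\infty)$: let $(T_k)_{k\in\mathbb{N}}$ be i.i.d. with law $\mathcal{T}$; $\mathcal{T}^{\delta_r}$ is the law of the random time $\tilde T$ defined a.s. by $\tilde T=(k-1)r+T_k$ on $\{T_1>r,\ldots,T_{k-1}>r,T_k\leq r\}$, $k\in\mathbb{N}$ (deterministic reset with period $r$). The tail function is $\overline{F}(t)=\mathcal{T}((t,\infty])$. *)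

(* Defs.v *)
From Stdlib Require Import Reals.
Open Scope R_scope.

Inductive xR : Type := Fin (x : R) | Inf.

Definition xgt (x : xR) (t : R) : Prop :=
  match x with Fin y => t < y | Inf => True end.

(* x <= b, where b = None stands for +infinity *)
Definition xle (x : xR) (b : option R) : Prop :=
  match b, x with
  | None, _ => True
  | Some b', Fin y => y <= b'
  | Some _, Inf => False
  end.

Definition xnonneg (x : xR) : Prop :=
  match x with Fin y => 0 <= y | Inf => True end.

Record prob_space : Type := {
  Omega : Type;
  meas : (Omega -> Prop) -> Prop;
  P : (Omega -> Prop) -> R;
  meas_full : meas (fun _ => True);
  meas_compl : forall A, meas A -> meas (fun w => ~ A w);
  meas_cunion : forall A : nat -> Omega -> Prop,
      (forall n, meas (A n)) -> meas (fun w => exists n, A n w);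
  P_nonneg : forall A, meas A -> 0 <= P A;
  P_full : P (fun _ => True) = 1;
  P_sigma_add : forall A : nat -> Omega -> Prop,
      (forall n, meas (A n)) ->
      (forall m n w, m <> n -> A m w -> A n w -> False) ->
      infinite_sum (fun n => P (A n)) (P (fun w => exists n, A n w))
}.

Fixpoint prodR (f : nat -> R) (n : nat) : R :=
  match n with O => 1 | S m => prodR f m * f m end.

Definition interval_event {Om : Type} (X : Om -> xR) (a : R) (b : option R)
  : Om -> Prop := fun w => xgt (X w) a /\ xle (X w) b.

(* (T_k) is an i.i.d. sequence of [0,infinity]-valued random variables whose
   common law has tail function Fbar, i.e. P(T_k > t) = Fbar t for t >= 0.
   Independence is required on the pi-system of intervals (a,b], (a,infinity]
   (which generates the Borel sets of [0,infinity] and contains the whole space). *)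
Definition iid_with_tail (S : prob_space) (T : nat -> Omega S -> xR)
  (Fbar : R -> R) : Prop :=
  (forall k w, xnonneg (T k w)) /\
  (forall k t, meas S (fun w => xgt (T k w) t)) /\
  (forall k t, 0 <= t -> P S (fun w => xgt (T k w) t) = Fbar t) /\
  (forall (n : nat) (a : nat -> R) (b : nat -> option R),
      P S (fun w => forall k, (k < n)%nat -> interval_event (T k) (a k) (b k) w)
      = prodR (fun k => P S (interval_event (T k) (a k) (b k))) n).

(* The event {Ttilde > t} for the deterministic reset with period r:
   Ttilde = (k-1) r + T_k on {T_1 > r, ..., T_(k-1) > r, T_k <= r}.
   Here indices are 0-based: j = k-1. *)
Definition reset_gt {Om : Type} (T : nat -> Om -> xR) (r t : R) : Om -> Prop :=
  fun w => exists j : nat,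
    (forall i, (i < j)%nat -> xgt (T i w) r) /\
    exists y, T j w = Fin y /\ y <= r /\ t < INR j * r + y.

Definition Fbar_ex (t : R) : R :=
  if Rlt_dec t 1 then exp (- t)
  else if Rle_dec t 2 then exp (- 2)
  else exp (- t).

(* Main.v *)
Require Import Defs.
From Stdlib Require Import Reals Lra Lia FunctionalExtensionality PropExtensionality Classical.
Open Scope R_scope.

Lemma set_ext {O : Type} (A B : O -> Prop) : (forall w, A w <-> B w) -> A = B.
Proof. intro H; apply functional_extensionality; intro w; apply propositional_extensionality; auto. Qed.

Section PS.
Variable Sp : prob_space.

Lemma meas_empty : meas Sp (fun _ => False).
Proof.
  replace (fun _ : Omega Sp => False) with (fun w : Omega Sp => ~ True).
  - apply meas_compl, meas_full.
  - apply set_ext; tauto.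
Qed.

Lemma meas_union2 A B : meas Sp A -> meas Sp B -> meas Sp (fun w => A w \/ B w).
Proof.
  intros HA HB.
  replace (fun w => A w \/ B w) with (fun w => exists n:nat, (match n with O => A | _ => B end) w).
  - apply meas_cunion; intros [|n]; auto.
  - apply set_ext; intro w; split.
    + intros [[|n] H]; auto.
    + intros [H|H]; [exists O | exists 1%nat]; auto.
Qed.

Lemma meas_inter A B : meas Sp A -> meas Sp B -> meas Sp (fun w => A w /\ B w).
Proof.
  intros HA HB.
  replace (fun w => A w /\ B w) with (fun w => ~ (~ A w \/ ~ B w)).
  - apply meas_compl, meas_union2; apply meas_compl; auto.
  - apply set_ext; intro w; tauto.
Qed.

Lemma sum_cst c n : sum_f_R0 (fun _ => c) n = INR (S n) * c.
Proof. induction n; simpl sum_f_R0; [simpl; lra|]. rewrite IHn. rewrite (S_INR (S n)). lra. Qed.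

Lemma P_empty : P Sp (fun _ => False) = 0.
Proof.
  assert (H := P_sigma_add Sp (fun _ _ => False) (fun _ => meas_empty) ltac:(tauto)).
  cbv beta in H.
  replace (fun w : Omega Sp => exists _ : nat, False) with (fun _ : Omega Sp => False) in H
    by (apply set_ext; intro; split; [tauto| intros [_ []]]).
  set (c := P Sp (fun _ => False)) in *.
  assert (Hc : 0 <= c) by apply (P_nonneg Sp _ meas_empty).
  destruct (Req_dec c 0) as [E|E]; auto.
  destruct (H c ltac:(lra)) as [N HN].
  specialize (HN (S N) ltac:(lia)). rewrite sum_cst in HN.
  unfold R_dist in HN. rewrite !S_INR in HN. pose proof (pos_INR N).
  assert (INR N * c >= 0) by (apply Rle_ge, Rmult_le_pos; lra).
  rewrite Rabs_right in HN; nra.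
Qed.

Lemma P_add A B : meas Sp A -> meas Sp B -> (forall w, A w -> B w -> False) ->
  P Sp (fun w => A w \/ B w) = P Sp A + P Sp B.
Proof.
  intros HA HB D.
  set (F := fun n : nat => match n with O => A | 1%nat => B | _ => fun _ => False end).
  assert (H := P_sigma_add Sp F).
  replace (fun w => exists n, F n w) with (fun w => A w \/ B w) in H.
  2:{ apply set_ext; intro w; split.
      - intros [h|h]; [exists O|exists 1%nat]; auto.
      - intros [[|[|n]] h]; simpl in h; tauto. }
  eapply uniqueness_sum. apply H.
  - intros [|[|n]]; simpl; auto using meas_empty.
  - intros [|[|m]] [|[|n]] w hmn; simpl; try tauto; try (intros; eapply D; eauto); lia.
  - assert (Hs : forall n, sum_f_R0 (fun n => P Sp (F n)) (S n) = P Sp A + P Sp B).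
    { induction n. - simpl. lra. - rewrite tech5, IHn. simpl. rewrite P_empty. lra. }
    intros eps he. exists 1%nat. intros n hn.
    destruct n as [|n]; [lia|]. cbv beta in Hs |- *. rewrite Hs.
    unfold R_dist; rewrite Rminus_diag, Rabs_R0; lra.
Qed.

Lemma P_split A B : meas Sp A -> meas Sp B ->
  P Sp A = P Sp (fun w => A w /\ B w) + P Sp (fun w => A w /\ ~ B w).
Proof.
  intros HA HB. rewrite <- P_add.
  - f_equal. apply set_ext; intro w; tauto.
  - apply meas_inter; auto.
  - apply meas_inter; auto. apply meas_compl; auto.
  - tauto.
Qed.
End PS.

Lemma exp_le_inc x y : x <= y -> exp x <= exp y.
Proof. intros [h|h]; [left; apply exp_increasing; auto| subst; lra]. Qed.

Lemma Fbar_lt1 t : t < 1 -> Fbar_ex t = exp (- t).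
Proof. intro h; unfold Fbar_ex; destruct (Rlt_dec t 1); [auto|lra]. Qed.

Lemma Fbar_1 : Fbar_ex 1 = exp (-2).
Proof. unfold Fbar_ex; destruct (Rlt_dec 1 1); [lra|]. destruct (Rle_dec 1 2); [auto|lra]. Qed.

Lemma part1 : forall u : R, 0 <= u -> Fbar_ex u * Fbar_ex 1 <= Fbar_ex (1 + u).
Proof.
  intros u hu. rewrite Fbar_1.
  unfold Fbar_ex.
  destruct (Rlt_dec u 1); destruct (Rlt_dec (1+u) 1); try lra;
  destruct (Rle_dec (1+u) 2); try (destruct (Rle_dec u 2)); try lra;
  rewrite <- exp_plus; apply exp_le_inc; lra.
Qed.

Section Part2.
Variable Sp : prob_space.
Variable T : nat -> Omega Sp -> xR.
Hypothesis HT : iid_with_tail Sp T Fbar_ex.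

Lemma xle_some x b : xle x (Some b) <-> ~ xgt x b.
Proof. destruct x; simpl; [split; intros; lra | tauto]. Qed.

Lemma gt_meas k t : meas Sp (fun w => xgt (T k w) t).
Proof. apply HT. Qed.

Lemma gt_P k t : 0 <= t -> P Sp (fun w => xgt (T k w) t) = Fbar_ex t.
Proof. apply HT. Qed.

Lemma ie_meas k a b : meas Sp (interval_event (T k) a b).
Proof.
  destruct b as [b|].
  - replace (interval_event (T k) a (Some b)) with
      (fun w => xgt (T k w) a /\ ~ xgt (T k w) b).
    + apply meas_inter; [apply gt_meas| apply meas_compl, gt_meas].
    + apply set_ext; intro w; unfold interval_event; rewrite xle_some; tauto.
  - replace (interval_event (T k) a None) with
      (fun w => xgt (T k w) a /\ True).
    + apply meas_inter; [apply gt_meas| apply meas_full].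
    + apply set_ext; intro w; unfold interval_event; simpl; tauto.
Qed.

Lemma ie_none k a : 0 <= a -> P Sp (interval_event (T k) a None) = Fbar_ex a.
Proof.
  intro ha. rewrite <- (gt_P k a ha). f_equal.
  apply set_ext; intro w; unfold interval_event; simpl; tauto.
Qed.

Lemma ie_some k a b : 0 <= a <= b ->
  P Sp (interval_event (T k) a (Some b)) = Fbar_ex a - Fbar_ex b.
Proof.
  intro ha.
  rewrite <- (gt_P k a) by lra. rewrite <- (gt_P k b) by lra.
  rewrite (P_split Sp _ _ (gt_meas k a) (gt_meas k b)).
  replace (fun w => xgt (T k w) a /\ xgt (T k w) b) with (fun w => xgt (T k w) b).
  - replace (interval_event (T k) a (Some b)) with
      (fun w => xgt (T k w) a /\ ~ xgt (T k w) b).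
    + lra.
    + apply set_ext; intro w; unfold interval_event; rewrite xle_some; tauto.
  - apply set_ext; intro w; destruct (T k w); simpl; split; try tauto; intros; lra.
Qed.

Lemma ie_some_neg k a b : a < 0 -> 0 <= b ->
  P Sp (interval_event (T k) a (Some b)) = 1 - Fbar_ex b.
Proof.
  intros ha hb.
  rewrite <- (gt_P k b) by lra. rewrite <- (P_full Sp).
  rewrite (P_split Sp _ _ (meas_full Sp) (gt_meas k b)).
  replace (fun w => True /\ xgt (T k w) b) with (fun w => xgt (T k w) b)
    by (apply set_ext; intro; tauto).
  replace (interval_event (T k) a (Some b)) with (fun w => True /\ ~ xgt (T k w) b).
  - lra.
  - apply set_ext; intro w; unfold interval_event; rewrite xle_some.
    destruct HT as [Hnn _]. specialize (Hnn k w).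
    destruct (T k w); simpl in *; split; try tauto; intros; lra.
Qed.

Lemma prod_meas n a b :
  meas Sp (fun w => forall k, (k < n)%nat -> interval_event (T k) (a k) (b k) w).
Proof.
  induction n.
  - replace (fun w : Omega Sp => forall k, (k < 0)%nat -> interval_event (T k) (a k) (b k) w)
      with (fun _ : Omega Sp => True).
    + apply meas_full.
    + apply set_ext; intro w; split; [intros _ k hk; lia| auto].
  - replace (fun w => forall k, (k < S n)%nat -> interval_event (T k) (a k) (b k) w)
      with (fun w => (forall k, (k < n)%nat -> interval_event (T k) (a k) (b k) w)
                     /\ interval_event (T n) (a n) (b n) w).
    + apply meas_inter; auto. apply ie_meas.
    + apply set_ext; intro w; split.
      * intros [h1 h2] k hk. destruct (Nat.eq_dec k n); [subst; auto| apply h1; lia].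
      * intros h; split; [intros; apply h; lia| apply h; lia].
Qed.

Variable r : R.
Hypothesis hr : 0 < r.

Definition E (j : nat) (w : Omega Sp) : Prop :=
  (forall i, (i < j)%nat -> xgt (T i w) r) /\
  exists y, T j w = Fin y /\ y <= r /\ 1 < INR j * r + y.

Definition aj (j k : nat) : R := if Nat.ltb k j then r else 1 - INR j * r.
Definition bj (j k : nat) : option R := if Nat.ltb k j then None else Some r.

Lemma E_eq j : E j = fun w => forall k, (k < S j)%nat -> interval_event (T k) (aj j k) (bj j k) w.
Proof.
  apply set_ext; intro w; split.
  - intros [Hi [y [Hy [Hyr Ht]]]] k hk. unfold aj, bj.
    destruct (Nat.ltb_spec k j).
    + split; [apply Hi; auto | exact I].
    + assert (k = j) by lia; subst. unfold interval_event; rewrite Hy; simpl; split; lra.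
  - intros Hk. split.
    + intros i hi. specialize (Hk i ltac:(lia)). unfold aj, bj in Hk.
      destruct (Nat.ltb_spec i j); [apply Hk|lia].
    + specialize (Hk j ltac:(lia)). unfold aj, bj in Hk.
      destruct (Nat.ltb_spec j j); [lia|]. destruct Hk as [H1 H2].
      destruct (T j w) eqn:?; simpl in H1, H2; [|contradiction].
      exists x; repeat split; lra.
Qed.

Lemma E_meas j : meas Sp (E j).
Proof. rewrite E_eq. apply prod_meas. Qed.

Lemma E_P j : P Sp (E j) = prodR (fun k => P Sp (interval_event (T k) (aj j k) (bj j k))) (S j).
Proof. rewrite E_eq. apply HT. Qed.

Lemma E_disj m n w : m <> n -> E m w -> E n w -> False.
Proof.
  intros hmn Em En.
  assert (G : forall m n, (m < n)%nat -> E m w -> E n w -> False).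
  { clear. intros m n h [_ [y [Hy [Hyr _]]]] [Hi _]. specialize (Hi m h).
    rewrite Hy in Hi. simpl in Hi. lra. }
  destruct (Nat.lt_gt_cases m n) as [[h|h] _]; auto; eauto.
Qed.

Lemma reset_sum : infinite_sum (fun n => P Sp (E n)) (P Sp (reset_gt T r 1)).
Proof.
  apply (P_sigma_add Sp E E_meas E_disj).
Qed.
End Part2.

Theorem mainTheorem11 :
  (forall u : R, 0 <= u -> Fbar_ex u * Fbar_ex 1 <= Fbar_ex (1 + u)) /\
  (forall (S : prob_space) (T : nat -> Omega S -> xR),
      iid_with_tail S T Fbar_ex ->
      forall eps : R, 0 < eps < 1/2 ->
        P S (reset_gt T (1/2 + eps) 1) > Fbar_ex 1).
Proof.
  split; [exact part1|].
  intros Sp T HT eps he.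
  set (r := 1/2 + eps).
  assert (hr : 1/2 < r < 1) by (unfold r; lra).
  pose proof (reset_sum Sp T HT r) as Hs.
  assert (Hle := sum_incr _ 3 _ Hs (fun n => P_nonneg Sp _ (E_meas Sp T HT r n))).
  simpl sum_f_R0 in Hle.
  assert (H0 := P_nonneg Sp _ (E_meas Sp T HT r 0)).
  rewrite !E_P in Hle by exact HT. simpl prodR in Hle.
  change (aj r 1 0) with r in Hle. change (bj r 1 0) with (@None R) in Hle.
  change (aj r 1 1) with (1 - INR 1 * r) in Hle. change (bj r 1 1) with (Some r) in Hle.
  change (aj r 2 0) with r in Hle. change (bj r 2 0) with (@None R) in Hle.
  change (aj r 2 1) with r in Hle. change (bj r 2 1) with (@None R) in Hle.
  change (aj r 2 2) with (1 - INR 2 * r) in Hle. change (bj r 2 2) with (Some r) in Hle.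
  change (aj r 3 0) with r in Hle. change (bj r 3 0) with (@None R) in Hle.
  change (aj r 3 1) with r in Hle. change (bj r 3 1) with (@None R) in Hle.
  change (aj r 3 2) with r in Hle. change (bj r 3 2) with (@None R) in Hle.
  change (aj r 3 3) with (1 - INR 3 * r) in Hle. change (bj r 3 3) with (Some r) in Hle.
  rewrite !ie_none in Hle by (auto || lra).
  rewrite ie_some in Hle by (auto; simpl; lra).
  rewrite !ie_some_neg in Hle by (auto; simpl; lra).
  simpl INR in Hle.
  rewrite !Fbar_lt1 in Hle by lra.
  rewrite Fbar_1.
  set (x := exp (- r)) in *.
  assert (e1 : x * exp (- (1 - 1 * r)) = exp (-1)) by (unfold x; rewrite <- exp_plus; replace (- r + - (1 - 1 * r)) with (-1) by ring; reflexivity).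
  assert (e4 : x * x * x * x < exp (-2)).
  { unfold x; rewrite <- !exp_plus. apply exp_increasing. lra. }
  assert (e2 : exp (-2) = exp (-1) * exp (-1)) by (rewrite <- exp_plus; replace (-1 + -1) with (-2) by ring; reflexivity).
  assert (e3 : exp (-1) * exp 1 = 1) by (rewrite <- exp_plus; replace (-1 + 1) with 0 by ring; apply exp_0).
  assert (e5 : 2 < exp 1) by (pose proof (exp_ineq1 1 ltac:(lra)); lra).
  assert (e6 : 0 < exp (-1)) by apply exp_pos.
  assert (e7 : exp (-1) < 1/2) by nra.
  assert (H00 := P_nonneg Sp _ (ie_meas Sp T HT 0 (aj r 0 0) (bj r 0 0))).
  assert (Hq : 1 * x * (exp (- (1 - 1 * r)) - x) + 1 * x * x * (1 - x) + 1 * x * x * x * (1 - x) = exp (-1) - x*x*x*x) by (rewrite <- e1; ring).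
  nra.
Qed.
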